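(* Let $G$ and $H$ be finitely generated groups whose growth functions $g_G(n)$ and $g_H(n)$ are polynomial and exponential, respectively. Then for any polynomial $t(n)$, $\mathfrak{L}(H)\not\subseteq \mathfrak{L}(G)^w_{t(n)}$.
   Context: For a group $G$ with identity $e$, a $G$-automaton is a tuple $(Q,\Sigma,G,\delta,q_0,Q_a)$ where $Q$ is a finite set of states, $\Sigma$ a finite input alphabet, $q_0\in Q$ the initial state, $Q_a\subseteq Q$ the accepting states, and $\delta$ assigns to each $(q,\sigma)\in Q\times(\Sigma\cup\{\varepsilon\})$ a finite set of pairs $(q',m)\in Q\times G$. The register holds an element of $G$, initially $e$; using a transition $(q',m)\in\delta(q,\sigma)$ (one step) the automaton reads $\sigma$ (or nothing), moves to $q'$ and replaces the register content $x$ by $xm$. A word is accepted if some computation reads it entirely and ends in an accepting state with register equal to $e$. $\mathfrak{L}(G)$ is the class of languages recognized by $G$-automata. A $G$-automaton recognizing $\mathtt{L}$ is weakly $t(n)$ time-bounded if every $x\in\mathtt{L}$ with $|x|=n$ has an accepting computation of at most $t(n)$ steps; $\mathfrak{L}(G)^w_{t(n)}$ is the class of languages recognized by such automata. The growth function $g_G(n)$ of $G$ with respect to a finite generating set $X$ is the number of elements of $G$ representable by words of length at most $n$ over $X\cup X^{-1}$. *)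

(* Defs.v *)
From mathcomp Require Import all_boot monoid.

Set Implicit Arguments.
Unset Strict Implicit.
Unset Printing Implicit Defensive.

Definition gprod (G : groupType) (w : seq G) : G := foldl (@mul G) (@one G) w.

Definition word_over (G : groupType) (X : seq G) (w : seq G) : Prop :=
  forall y, y \in w -> (y \in X) \/ (@inv G y \in X).

Definition generates (G : groupType) (X : seq G) : Prop :=
  forall g : G, exists w : seq G, word_over X w /\ gprod w = g.

Definition in_ball (G : groupType) (X : seq G) (n : nat) (g : G) : Prop :=
  exists w : seq G, word_over X w /\ size w <= n /\ gprod w = g.

(* g_G(n) <= b  : every duplicate-free list of ball elements has size <= b *)
Definition growth_le (G : groupType) (X : seq G) (n b : nat) : Prop :=
  forall l : seq G, uniq l -> (forall g, g \in l -> in_ball X n g) -> size l <= b.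

Definition growth_ge_ratio (G : groupType) (X : seq G) (n p q : nat) : Prop :=
  exists l : seq G, uniq l /\ (forall g, g \in l -> in_ball X n g) /\
                    p ^ n <= q ^ n * size l.

Definition fg_polynomial_growth (G : groupType) : Prop :=
  exists X : seq G, generates X /\
    exists c d : nat, forall n, growth_le X n (c * n ^ d + c).

(* G is finitely generated with exponential growth function:
   g_G(n) >= a^n for some rational a = p/q > 1 and all large n *)
Definition fg_exponential_growth (G : groupType) : Prop :=
  exists X : seq G, generates X /\
    exists p q N : nat, 0 < q < p /\
      forall n, N <= n -> growth_ge_ratio X n p q.

Record gautomaton (G : groupType) (Sigma : finType) := GAutomaton {
  state : finType;
  delta : state -> option Sigma -> seq (state * G);   (* None = epsilon *)
  q0 : state;
  accepting : pred state
}.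

(* a computation = list of steps (label read, (target state, multiplier)) *)
Definition step (G : groupType) (Sigma : finType) (A : gautomaton G Sigma) :=
  (option Sigma * (state A * G))%type.

Fixpoint valid_from (G : groupType) (Sigma : finType) (A : gautomaton G Sigma)
    (q : state A) (c : seq (step A)) : Prop :=
  match c with
  | [::] => True
  | (s, (q', m)) :: c' => (q', m) \in @delta _ _ A q s /\ valid_from q' c'
  end.

Definition comp_word (G : groupType) (Sigma : finType) (A : gautomaton G Sigma)
    (c : seq (step A)) : seq Sigma := pmap id (map fst c).

Definition comp_final (G : groupType) (Sigma : finType) (A : gautomaton G Sigma)
    (c : seq (step A)) : state A := last (q0 A) (map (fun s => s.2.1) c).

Definition comp_register (G : groupType) (Sigma : finType) (A : gautomaton G Sigma)
    (c : seq (step A)) : G := gprod (map (fun s => s.2.2) c).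

Arguments valid_from {G Sigma} A q c.
Arguments comp_word {G Sigma} A c.
Arguments comp_final {G Sigma} A c.
Arguments comp_register {G Sigma} A c.

Definition accepting_comp (G : groupType) (Sigma : finType) (A : gautomaton G Sigma)
    (x : seq Sigma) (c : seq (step A)) : Prop :=
  [/\ valid_from A (q0 A) c, comp_word A c = x,
      @accepting _ _ A (comp_final A c) & comp_register A c = @one G].

Arguments accepting_comp {G Sigma} A x c.

Definition accepts (G : groupType) (Sigma : finType) (A : gautomaton G Sigma)
    (x : seq Sigma) : Prop := exists c, accepting_comp A x c.

Definition language (Sigma : finType) := seq Sigma -> Prop.

Definition recognizes (G : groupType) (Sigma : finType) (A : gautomaton G Sigma)
    (L : language Sigma) : Prop := forall x, L x <-> accepts A x.

Definition weakly_time_bounded (G : groupType) (Sigma : finType)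
    (A : gautomaton G Sigma) (L : language Sigma) (t : nat -> nat) : Prop :=
  forall x, L x -> exists c, accepting_comp A x c /\ size c <= t (size x).

Definition in_LG (G : groupType) (Sigma : finType) (L : language Sigma) : Prop :=
  exists A : gautomaton G Sigma, recognizes A L.

Definition in_LG_weak (G : groupType) (t : nat -> nat) (Sigma : finType)
    (L : language Sigma) : Prop :=
  exists A : gautomaton G Sigma, recognizes A L /\ weakly_time_bounded A L t.

Definition natpoly (cs : seq nat) (n : nat) : nat :=
  \sum_(i < size cs) nth 0 cs i * n ^ i.

(* Main.v *)
Require Import Defs.
From mathcomp Require Import all_boot monoid zify.
Set Implicit Arguments.
Unset Strict Implicit.
Unset Printing Implicit Defensive.

Lemma inj_count (A B : eqType) (R : A -> B -> Prop) (P : B -> Prop) (l : seq A) :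
  uniq l -> (forall a, a \in l -> exists b, R a b /\ P b) ->
  (forall a a' b, R a b -> R a' b -> a = a') ->
  exists l' : seq B, [/\ uniq l', size l' = size l &
     forall b, b \in l' -> P b /\ exists a, a \in l /\ R a b].
Proof.
move=> ul hex hinj; elim: l ul hex => [|a l IH] /= ul hex; first by exists [::].
move: ul => /andP [anl ul].
have [l' [u' s' h']] : exists l' : seq B, [/\ uniq l', size l' = size l &
     forall b, b \in l' -> P b /\ exists a, a \in l /\ R a b].
  by apply: IH => // a' ha'; apply: hex; rewrite inE ha' orbT.
have [b [hb pb]] := hex a (mem_head _ _).
exists (b :: l'); split => /=.
- rewrite u' andbT; apply/negP => /h' [_ [a' [ha' Ra']]].
  by move: anl; rewrite (hinj _ _ _ hb Ra') ha'.
- by rewrite s'.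
- move=> b'; rewrite inE => /orP [/eqP ->|/h' [pb' [a' [ha' Ra']]]].
    by split=> //; exists a; rewrite mem_head.
  by split=> //; exists a'; rewrite inE ha' orbT.
Qed.

Lemma partition_bound (Q : finType) (G : eqType) (Pg : G -> Prop) (B : nat)
   (l : seq (Q * G)) :
  uniq l -> (forall c, c \in l -> Pg c.2) ->
  (forall lg : seq G, uniq lg -> (forall g, g \in lg -> Pg g) -> size lg <= B) ->
  size l <= #|Q| * B.
Proof.
move=> ul hP hB.
have -> : size l = \sum_(q : Q) count (fun c => c.1 == q) l.
  elim: l {ul hP} => [|c l IH] /=; first by rewrite big1.
  rewrite big_split /= -IH (bigD1 c.1) //= eqxx big1 ?add1n ?addn0 //.
  by move=> q /negbTE; rewrite eq_sym => ->.
rewrite -sum_nat_const; apply: leq_sum => q _.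
rewrite -size_filter -(size_map snd); apply: hB.
- rewrite map_inj_in_uniq ?filter_uniq //.
  move=> [q1 g1] [q2 g2]; rewrite !mem_filter /= => /andP [/eqP -> _] /andP [/eqP -> _].
  by move=> ->.
- by move=> g /mapP [c]; rewrite mem_filter => /andP [_ /hP] ? ->.
Qed.

Lemma expn_mono m n e : m <= n -> m ^ e <= n ^ e.
Proof. by case: e => [|e] // h; rewrite leq_exp2r. Qed.

Lemma bern q k : q ^ k * (q + k) <= (q + 1) ^ k * q.
Proof.
elim: k => [|k IH]; first by rewrite !expn0; lia.
have h1 : q ^ k <= (q + 1) ^ k by apply: expn_mono; lia.
rewrite !expnS; nia.
Qed.

Lemma bern2 q m : 0 < q -> 2 ^ m * q ^ (q * m) <= (q + 1) ^ (q * m).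
Proof.
move=> q0; have h := bern q q.
have h2 : 2 * q ^ q <= (q + 1) ^ q.
  rewrite -(leq_pmul2r q0); nia.
rewrite !expnM -expnMn; exact: expn_mono.
Qed.

Lemma exp_beats (p q N C0 E : nat) : 0 < q < p ->
  exists n, N <= n /\ q ^ n * (C0 * (2 * n + 1) ^ E) < p ^ n.
Proof.
move=> /andP [q0 qp].
set b := (2 * q + 1).
set A := C0 + E * b.
set r := A + 2 * E + 1 + N.
set s := 2 * r.
set m := 2 ^ s.
exists (q * m).
have hr : r < 2 ^ r by apply: ltn_expl.
have hs : s < 2 ^ s by apply: ltn_expl.
have hb : b < 2 ^ b by apply: ltn_expl.
have hC : C0 < 2 ^ C0 by apply: ltn_expl.
have hm : 2 ^ s = 2 ^ r * 2 ^ r by rewrite /s mul2n -addnn expnD.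
split.
  rewrite /m; nia.
have key : C0 + (b + s) * E <= m.
  rewrite /m hm /s; nia.
have h2n : 2 * (q * m) + 1 <= 2 ^ (b + s).
  rewrite expnD /m; nia.
have hpow : (2 * (q * m) + 1) ^ E <= 2 ^ ((b + s) * E).
  by rewrite expnM; apply: expn_mono.
have hpos : 0 < 2 ^ ((b + s) * E) by rewrite expn_gt0.
have h3 : C0 * (2 * (q * m) + 1) ^ E < 2 ^ m.
  apply: (@leq_ltn_trans (C0 * 2 ^ ((b + s) * E))); first by apply: leq_mul.
  apply: (@leq_trans (2 ^ C0 * 2 ^ ((b + s) * E))); first by rewrite ltn_pmul2r.
  by rewrite -expnD leq_exp2l.
have hqn : 0 < q ^ (q * m) by rewrite expn_gt0 q0.
apply: (@leq_trans (2 ^ m * q ^ (q * m))).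
  by rewrite mulnC ltn_pmul2r.
apply: (leq_trans (bern2 m q0)).
by apply: expn_mono; lia.
Qed.
Local Open Scope group_scope.

Section GroupLemmas.
Variable G : groupType.
Implicit Types (s t : seq G) (x y : G).

Lemma foldl_mulg a s : foldl (@mul G) a s = a * gprod s.
Proof.
elim: s a => [|y s IH] a /=; first by rewrite /gprod /= mulg1.
by rewrite /gprod /= IH [foldl _ (1 * y) _]IH mul1g mulgA.
Qed.

Lemma gprod_cat s t : gprod (s ++ t) = gprod s * gprod t.
Proof. by rewrite /gprod foldl_cat foldl_mulg. Qed.

Lemma gprod_cons y s : gprod (y :: s) = y * gprod s.
Proof. by rewrite /gprod /= foldl_mulg mul1g. Qed.

Lemma gprod_nil : gprod [::] = 1 :> G.
Proof. by []. Qed.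

Lemma gprod_rev_inv s : gprod (rev (map (@inv G) s)) = (gprod s)^-1.
Proof.
elim: s => [|y s IH]; first by rewrite /= gprod_nil invg1.
rewrite /= rev_cons -cats1 gprod_cat IH gprod_cons gprod_cons gprod_nil.
by rewrite mulg1 invgM.
Qed.

Lemma in_ball_mono (X : seq G) n m g : n <= m -> in_ball X n g -> in_ball X m g.
Proof. by move=> le [w [hw [hs hg]]]; exists w; split=> //; split=> //; apply: leq_trans le. Qed.

Lemma in_ball_mul (X : seq G) n m g h :
  in_ball X n g -> in_ball X m h -> in_ball X (n + m) (g * h).
Proof.
move=> [w [hw [hs hg]]] [w' [hw' [hs' hg']]]; exists (w ++ w'); split.
  by move=> y; rewrite mem_cat => /orP [] ?; [apply: hw|apply: hw'].
by rewrite size_cat gprod_cat hg hg' leq_add.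
Qed.

Lemma in_ball_1 (X : seq G) n : in_ball X n 1.
Proof. by exists [::]; split=> //; move=> y. Qed.

Lemma in_ball_list (X : seq G) (M : seq G) : generates X ->
  exists K, forall m, m \in M -> in_ball X K m.
Proof.
move=> gen; elim: M => [|m M [K HK]]; first by exists 0.
have [w [hw hg]] := gen m.
exists (K + size w) => y; rewrite inE => /orP [/eqP ->|yM].
  by apply: (@in_ball_mono _ (size w)); [exact: leq_addl| exists w].
by apply: (@in_ball_mono _ K); [exact: leq_addr| exact: HK].
Qed.
End GroupLemmas.

Section Comp.
Variables (G : groupType) (Sigma : finType) (A : gautomaton G Sigma).

Definition stf (s : step A) : state A := s.2.1.

Lemma valid_cat q c1 c2 : valid_from A q (c1 ++ c2) <->
  valid_from A q c1 /\ valid_from A (last q (map stf c1)) c2.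
Proof.
elim: c1 q => [|[s [q' m]] c1 IH] q /=; first by split=> // [[]].
rewrite IH; tauto.
Qed.

Lemma comp_word_cat c1 c2 : comp_word A (c1 ++ c2) = comp_word A c1 ++ comp_word A c2.
Proof. by rewrite /comp_word map_cat pmap_cat. Qed.

Lemma comp_register_cat c1 c2 :
  comp_register A (c1 ++ c2) = comp_register A c1 * comp_register A c2.
Proof. by rewrite /comp_register map_cat gprod_cat. Qed.

Lemma comp_word_split c a b : comp_word A c = a ++ b ->
  exists c1 c2, [/\ c = c1 ++ c2, comp_word A c1 = a & comp_word A c2 = b].
Proof.
elim: c a => [|[[y|] st] c IH] a /=.
- by case: a => //= <-; exists [::], [::].
- rewrite /comp_word /=; case: a => [|z a] /=.
    by move=> <-; exists [::], ((Some y, st) :: c).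
  case=> -> /IH [c1 [c2 [-> h1 h2]]].
  by exists ((Some z, st) :: c1), c2; rewrite /comp_word /= -/(comp_word A c1) h1.
- rewrite /comp_word /= => /IH [c1 [c2 [-> h1 h2]]].
  by exists ((None, st) :: c1), c2.
Qed.

Lemma register_ball (X : seq G) K q c :
  (forall q s q' m, (q', m) \in @delta _ _ A q s -> in_ball X K m) ->
  valid_from A q c -> in_ball X (K * size c) (comp_register A c).
Proof.
move=> HK; elim: c q => [|[s [q' m]] c IH] q /=.
  by move=> _; rewrite muln0; exact: in_ball_1.
move=> [hm hv]; rewrite /comp_register /= gprod_cons mulnS.
apply: in_ball_mul; first exact: HK hm.
exact: IH hv.
Qed.

Lemma mult_bound (X : seq G) : generates X ->
  exists K, forall q s q' m, (q', m) \in @delta _ _ A q s -> in_ball X K m.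
Proof.
move=> gen.
have : forall l : seq (state A * option Sigma), exists K, forall qs, qs \in l ->
   forall q' m, (q', m) \in @delta _ _ A qs.1 qs.2 -> in_ball X K m.
  elim=> [|qs l [K HK]]; first by exists 0.
  have [K1 HK1] := in_ball_list (map snd (@delta _ _ A qs.1 qs.2)) gen.
  exists (K + K1) => qs'; rewrite inE => /orP [/eqP ->|ql] q' m hm.
    apply: (@in_ball_mono _ _ K1); first exact: leq_addl.
    by apply: HK1; apply/mapP; exists (q', m).
  by apply: (@in_ball_mono _ _ K); [exact: leq_addr| exact: HK hm].
move=> /(_ (enum [set: (state A * option Sigma)%type])) [K HK].
exists K => q s q' m hm; apply: (HK (q, s)) hm; by rewrite mem_enum in_setT.
Qed.
End Comp.

Section HAut.
Variables (H : groupType) (X : seq H).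

Local Notation Lt := (bool * 'I_(size X))%type.
Local Notation Sig := (option Lt).
Definition phi (l : Lt) : H := if l.1 then nth 1 X l.2 else (nth 1 X l.2)^-1.
Definition flip (l : Lt) : Lt := (~~ l.1, l.2).
Lemma phi_flip l : phi (flip l) = (phi l)^-1.
Proof. by case: l => [[] i]; rewrite /phi /= ?invgK. Qed.

Definition Lang : language Sig := fun x =>
  count (fun a => a == None) x = 1%N /\ gprod (map phi (pmap id x)) = 1.

Definition hdelta (b : bool) (s : option Sig) : seq (bool * H) :=
  match s with
  | None => [::]
  | Some (Some l) => [:: (b, phi l)]
  | Some None => if b then [::] else [:: (true, 1)]
  end.

Definition HA : gautomaton H Sig := @GAutomaton H Sig bool hdelta false id.

Fixpoint build (b : bool) (x : seq Sig) : seq (step HA) :=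
  match x with
  | [::] => [::]
  | Some l :: x' => (Some (Some l), (b, phi l)) :: build b x'
  | None :: x' => (Some None, (true, 1)) :: build true x'
  end.

Lemma build_ok (b : bool) (x : seq Sig) : b + count (fun a => a == None) x <= 1 ->
  [/\ valid_from HA b (build b x), comp_word HA (build b x) = x,
      last b (map (@stf _ _ HA) (build b x)) = b || (0 < count (fun a => a == None) x)
    & comp_register HA (build b x) = gprod (map phi (pmap id x))].
Proof.
elim: x b => [|[l|] x IH] b /=.
- by rewrite orbF.
- move=> hc; have [h1 h2 h3 h4] := IH b hc.
  rewrite /comp_word /= -/(comp_word HA _) h2.
  split; rewrite ?mem_seq1 ?eqxx //.
  by rewrite /comp_register /= gprod_cons -/(comp_register HA _) h4 /= gprod_cons.
- case: b => //= hc; have [h1 h2 h3 h4] := IH true (ltac:(move: hc; rewrite !add0n add1n ltnS leqn0; lia)).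
  rewrite /comp_word /= -/(comp_word HA _) h2.
  split; rewrite ?mem_seq1 ?eqxx //.
  + by rewrite /comp_register /= gprod_cons -/(comp_register HA _) h4 mul1g.
Qed.

Lemma valid_inv (b : bool) (c : seq (step HA)) : valid_from HA b c ->
  [/\ comp_register HA c = gprod (map phi (pmap id (comp_word HA c))),
      b + count (fun a => a == None) (comp_word HA c) = last b (map (@stf _ _ HA) c) :> nat
    & b -> last b (map (@stf _ _ HA) c)].
Proof.
elim: c b => [|[s [q' m]] c IH] b /=.
  by move=> _; rewrite addn0.
case: s => [[l|]|] /=; last by rewrite in_nil => -[].
- rewrite mem_seq1 => -[/eqP [-> ->] /IH [h1 h2 h3]].
  rewrite /comp_register /comp_word /= gprod_cons -/(comp_register HA _) h1 /=.
  by rewrite gprod_cons.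
- case: b => /=; first by rewrite in_nil => -[]. rewrite mem_seq1 => -[/eqP [-> ->] /IH [h1 h2 h3]].
  rewrite /comp_register /comp_word /= gprod_cons -/(comp_register HA _) h1 mul1g.
  split=> //; rewrite -h2 /=; lia.
Qed.

Lemma HA_recognizes : recognizes HA Lang.
Proof.
move=> x; split.
- move=> [hc hg]; have [h1 h2 h3 h4] := build_ok (b := false) (x := x) (ltac:(rewrite hc; by [])).
  exists (build false x); split=> //.
  + by move: h3; rewrite /comp_final /stf /= hc => ->.
  + by rewrite h4.
- move=> [c [hv hw ha hr]]; have [h1 h2 h3] := valid_inv hv.
  split; last by rewrite -hw -h1.
  rewrite -hw; move: h2; rewrite add0n.
  move: ha; rewrite /comp_final /stf /=; case: (last _ _) => //.
Qed.
End HAut.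

Section Words.
Variables (H : groupType) (X : seq H).
Local Notation Lt := (bool * 'I_(size X))%type.

Lemma word_lift w : word_over X w -> exists u : seq Lt, map (@phi H X) u = w.
Proof.
elim: w => [|y w IH] hw; first by exists [::].
have [u hu] : exists u : seq Lt, map (@phi H X) u = w.
  by apply: IH => z hz; apply: hw; rewrite inE hz orbT.
have : (y \in X) \/ (y^-1 \in X) by apply: hw; rewrite inE eqxx.
case=> hy.
- have hi : index y X < size X by rewrite index_mem.
  exists ((true, Ordinal hi) :: u).
  by rewrite /= hu /phi /= nth_index.
- have hi : index (y^-1) X < size X by rewrite index_mem.
  exists ((false, Ordinal hi) :: u).
  by rewrite /= hu /phi /= nth_index // invgK.
Qed.

Lemma pmap_id_some (T : Type) (u : seq T) : pmap id (map Some u) = u.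
Proof. by elim: u => //= a u ->. Qed.

Lemma count_none_some (T : eqType) (u : seq T) : count (fun a => a == None) (map Some u) = 0.
Proof. by elim: u. Qed.

Lemma Lang_split (u v : seq Lt) :
  Lang (map Some u ++ None :: map Some v) <-> gprod (map (@phi H X) (u ++ v)) = 1.
Proof.
rewrite /Lang count_cat /= !count_none_some pmap_cat /= !pmap_id_some.
by split=> [[]|].
Qed.

Lemma inv_word (u : seq Lt) : gprod (map (@phi H X) (u ++ rev (map (@flip H X) u))) = 1.
Proof.
rewrite map_cat gprod_cat map_rev -map_comp.
have -> : [seq (@phi H X \o @flip H X) i | i <- u] = map (@inv H) (map (@phi H X) u).
  by rewrite -map_comp; apply: eq_map => l /=; rewrite phi_flip.
by rewrite gprod_rev_inv mulgV.
Qed.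
End Words.

Lemma natpoly_bound cs m M : 0 < M -> m <= M ->
  natpoly cs m <= (\sum_(i < size cs) nth 0 cs i) * M ^ size cs.
Proof.
move=> M0 mM; rewrite /natpoly big_distrl /=; apply: leq_sum => i _.
apply: leq_mul => //; apply: (@leq_trans (M ^ i)); first exact: expn_mono.
by apply: leq_pexp2l => //; apply: ltnW.
Qed.

Section Main.
Variables (G H : groupType) (XH : seq H).
Local Notation Lt := (bool * 'I_(size XH))%type.
Local Notation Sig := (option Lt).
Variable (A : gautomaton G Sig).
Hypothesis recA : recognizes A (@Lang H XH).

Definition Rcfg (h : H) (cfg : (state A * G)%type) : Prop :=
  exists (u : seq Lt) (c1 c2 : seq (step A)) (v : seq Lt),
  [/\ gprod (map (@phi H XH) u) = h, comp_word A c1 = map Some u ++ [:: None],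
      comp_word A c2 = map Some v & valid_from A (q0 A) c1] /\
      [/\ last (q0 A) (map (@stf _ _ A) c1) = cfg.1,
          comp_register A c1 = cfg.2, valid_from A cfg.1 c2,
          accepting (last cfg.1 (map (@stf _ _ A) c2)) &
          cfg.2 * comp_register A c2 = 1].

Lemma glue (u : seq Lt) c1 cfg c2 v :
  comp_word A c1 = map Some u ++ [:: None] -> comp_word A c2 = map Some v ->
  valid_from A (q0 A) c1 -> last (q0 A) (map (@stf _ _ A) c1) = cfg.1 ->
  comp_register A c1 = cfg.2 -> valid_from A cfg.1 c2 ->
  accepting (last cfg.1 (map (@stf _ _ A) c2)) -> cfg.2 * comp_register A c2 = 1 ->
  gprod (map (@phi H XH) u) * gprod (map (@phi H XH) v) = 1.
Proof.
move=> w1 w2 v1 l1 r1 v2 a2 r2.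
have : @Lang H XH (map Some u ++ None :: map Some v).
  apply/recA; exists (c1 ++ c2); split.
  - by apply/valid_cat; rewrite l1.
  - by rewrite comp_word_cat w1 w2 -catA.
  - by rewrite /comp_final map_cat last_cat; move: l1 a2; rewrite /stf => ->.
  - by rewrite comp_register_cat r1.
by move/Lang_split; rewrite map_cat gprod_cat.
Qed.

Lemma Rcfg_inj h h' cfg : Rcfg h cfg -> Rcfg h' cfg -> h = h'.
Proof.
move=> [u [c1 [c2 [v [[e1 w1 w2 v1] [l1 r1 v2 a2 rr2]]]]]].
move=> [u' [c1' [c2' [v' [[e1' w1' w2' v1'] [l1' r1' v2' a2' rr2']]]]]].
have g1 := glue w1 w2' v1 l1 r1 v2' a2' rr2'.
have g2 := glue w1' w2' v1' l1' r1' v2' a2' rr2'.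
rewrite -e1 -e1'; apply: (@mulIg _ (gprod (map (@phi H XH) v'))).
by rewrite g1 g2.
Qed.

Lemma Rcfg_exists (XG : seq G) K t Tb n h :
  (forall q s q' m, (q', m) \in @delta _ _ A q s -> in_ball XG K m) ->
  weakly_time_bounded A (@Lang H XH) t ->
  (forall k, k <= n -> t (2 * k + 1) <= Tb) ->
  in_ball XH n h -> exists cfg, Rcfg h cfg /\ in_ball XG (K * Tb) cfg.2.
Proof.
move=> HK htb hT [w [hw [hs hg]]].
have [u hu] := word_lift hw.
set v := rev (map (@flip H XH) u).
have hL : @Lang H XH (map Some u ++ None :: map Some v).
  by apply/Lang_split; apply: inv_word.
have [c [[hv hwd ha hr] hc]] := htb _ hL.
have [c1 [c2 [ec w1 w2]]] : exists c1 c2,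
    [/\ c = c1 ++ c2, comp_word A c1 = map Some u ++ [:: None] & comp_word A c2 = map Some v].
  by apply: comp_word_split; rewrite hwd -catA.
move: hv; rewrite ec => /valid_cat [v1 v2].
exists (last (q0 A) (map (@stf _ _ A) c1), comp_register A c1); split.
  exists u, c1, c2, v; split; split => //.
  - by rewrite -hg -hu.
  - by move: ha; rewrite /comp_final ec map_cat last_cat.
  - by move: hr; rewrite ec comp_register_cat.
apply: (in_ball_mono _ (register_ball HK v1)).
rewrite leq_mul2l; apply/orP; right.
apply: (leq_trans _ (hT (size u) _)); last by rewrite -(size_map (@phi H XH)) hu.
have -> : (2 * size u + 1 = size (map Some u ++ None :: map Some v))%N.
  by rewrite size_cat /= !size_map /v size_rev size_map; lia.
apply: leq_trans hc; rewrite ec size_cat; exact: leq_addr.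
Qed.
End Main.
Local Close Scope group_scope.

Theorem theorem4p4 (G H : groupType) :
  fg_polynomial_growth G -> fg_exponential_growth H ->
  forall (cs : seq nat) (t : nat -> nat), (forall n, t n <= natpoly cs n) ->
  exists (Sigma : finType) (L : language Sigma),
    in_LG H L /\ ~ in_LG_weak G t L.
Proof.
move=> [XG [genG [c [d hG]]]] [XH [genH [p [q [N [hpq hH]]]]]] cs t ht.
exists (option (bool * 'I_(size XH)))%type, (@Lang H XH).
split; first by exists (HA XH); apply: HA_recognizes.
move=> [A [recA tbA]].
have [K HK] := mult_bound A genG.
set S := \sum_(i < size cs) nth 0 cs i.
set D := size cs.
set C0 := #|state A| * (c * ((K * S) ^ d + 1)).
have [n [Nn hlt]] := exp_beats N C0 (D * d) hpq.
have [l [ul [hl hpl]]] := hH n Nn.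
set Tb := S * (2 * n + 1) ^ D.
have hT : forall k, k <= n -> t (2 * k + 1) <= Tb.
  by move=> k kn; apply: leq_trans (ht _) _; apply: natpoly_bound; lia.
have [l' [ul' sl' hl']] := inj_count (R := @Rcfg G H XH A)
   (P := fun cfg => in_ball XG (K * Tb) cfg.2) ul
   (fun h hh => Rcfg_exists HK tbA hT (hl h hh))
   (fun a a' b => @Rcfg_inj G H XH A recA a a' b).
have hsz : size l' <= #|state A| * (c * (K * Tb) ^ d + c).
  apply: (partition_bound ul' (fun cfg h => (hl' cfg h).1)).
  by move=> lg ulg hlg; exact: hG (K * Tb) lg ulg hlg.
set Y := (2 * n + 1) ^ (D * d).
have hY : 0 < Y by rewrite expn_gt0 addn1.
have hKT : (K * Tb) ^ d = (K * S) ^ d * Y.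
  by rewrite /Tb mulnA expnMn /Y expnM.
have hsz2 : size l <= C0 * Y.
  rewrite -sl'; apply: (leq_trans hsz); rewrite /C0 hKT -mulnA leq_mul2l; apply/orP; right.
  nia.
have := leq_trans hpl (leq_mul (leqnn (q ^ n)) hsz2).
by rewrite leqNgt hlt.
Qed.
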